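(* Let $f_{ijk}$ be a triangle face with radii $r_i,r_j,r_k>0$ at its vertices and inversive distances $a=I_{jk}$, $b=I_{ki}$, $c=I_{ij}$, all $>1$, and suppose the edge lengths $l_{ij}=\sqrt{r_i^2+r_j^2+2I_{ij}r_ir_j}$ (and similarly $l_{jk},l_{ki}$) satisfy the triangle inequality. Realize $f_{ijk}$ as a Euclidean triangle in $\mathbb{E}^2$ with these side lengths, and let $\rho_{ijk}$ be the radius of the unique circle orthogonal to the three circles centered at $v_i,v_j,v_k$ with radii $r_i,r_j,r_k$. Then \[r_ir_jr_k\sqrt{\Delta_{abc}}=2\rho_{ijk}\operatorname{Area}(f_{ijk}),\qquad \Delta_{abc}=a^2+b^2+c^2+2abc-1.\]
   Context: The inversive distance of two circles with radii $r_1,r_2$ whose centers are at distance $l$ is $(l^2-r_1^2-r_2^2)/(2r_1r_2)$. *)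

(* Defs.v *)
From HB Require Import structures.
From mathcomp Require Import all_boot all_order all_algebra.
Set Implicit Arguments. Unset Strict Implicit. Unset Printing Implicit Defensive.
Import Order.TTheory GRing.Theory Num.Theory.
Local Open Scope ring_scope.

Section Defs.
Variable R : rcfType.

Definition dist2 (p q : R * R) : R := (p.1 - q.1) ^+ 2 + (p.2 - q.2) ^+ 2.
Definition dist (p q : R * R) : R := Num.sqrt (dist2 p q).

Definition edge_length (ri rj I : R) : R :=
  Num.sqrt (ri ^+ 2 + rj ^+ 2 + 2 * I * ri * rj).

Definition inversive_distance (c1 : R * R) (r1 : R) (c2 : R * R) (r2 : R) : R :=
  (dist2 c1 c2 - r1 ^+ 2 - r2 ^+ 2) / (2 * r1 * r2).

Definition orthogonal_circles (c1 : R * R) (r1 : R) (c2 : R * R) (r2 : R) : Prop :=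
  dist2 c1 c2 = r1 ^+ 2 + r2 ^+ 2.

Definition triangle_area (p q s : R * R) : R :=
  `| (q.1 - p.1) * (s.2 - p.2) - (s.1 - p.1) * (q.2 - p.2) | / 2.

Definition Delta_abc (a b c : R) : R := a ^+ 2 + b ^+ 2 + c ^+ 2 + 2 * a * b * c - 1.

End Defs.

(* Main.v *)
Require Import Defs.
From HB Require Import structures.
From mathcomp Require Import all_boot all_order all_algebra.
From mathcomp Require Import ring lra.
Import Order.TTheory GRing.Theory Num.Theory.
Set Implicit Arguments. Unset Strict Implicit.
Local Open Scope ring_scope.

Lemma core (R : rcfType) (x1 x2 u1 u2 w1 w2 ri rj rk a b c : R) :
  u1^+2 + u2^+2 = ri^+2 + rj^+2 + 2*c*ri*rj ->
  w1^+2 + w2^+2 = ri^+2 + rk^+2 + 2*b*ri*rk ->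
  (u1-w1)^+2 + (u2-w2)^+2 = rj^+2 + rk^+2 + 2*a*rj*rk ->
  x1*u1 + x2*u2 = (ri^+2 - rj^+2 + (ri^+2 + rj^+2 + 2*c*ri*rj)) / 2 ->
  x1*w1 + x2*w2 = (ri^+2 - rk^+2 + (ri^+2 + rk^+2 + 2*b*ri*rk)) / 2 ->
  ((x1^+2 + x2^+2) - ri^+2) * (u1*w2 - u2*w1)^+2 = (ri*rj*rk)^+2 * Delta_abc a b c.
Proof.
move=> Lu Lw Luw ha hb.
have huw : u1*w1 + u2*w2 = ((u1^+2 + u2^+2) + (w1^+2 + w2^+2) - ((u1-w1)^+2 + (u2-w2)^+2)) / 2.
  by field.
rewrite Lu Lw Luw in huw.
have D2 : (u1*w2 - u2*w1)^+2 = (u1^+2 + u2^+2)*(w1^+2 + w2^+2) - (u1*w1+u2*w2)^+2 by ring.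
have K : (x1^+2+x2^+2)*(u1*w2-u2*w1)^+2 = (x1*u1+x2*u2)^+2*(w1^+2+w2^+2)
   - 2*(x1*u1+x2*u2)*(x1*w1+x2*w2)*(u1*w1+u2*w2) + (x1*w1+x2*w2)^+2*(u1^+2+u2^+2) by ring.
rewrite mulrBl K ha hb huw Lu Lw D2 Lu Lw huw /Delta_abc.
by field.
Qed.

Lemma arg_pos (R : rcfType) (ri rj I : R) : 0 < ri -> 0 < rj -> 1 < I ->
  0 < ri^+2 + rj^+2 + 2*I*ri*rj.
Proof.
move=> hi hj hI.
have h1 : 0 < 2*I*ri*rj by rewrite !mulr_gt0 // (lt_trans ltr01 hI).
have h2 : 0 <= ri^+2 by apply: sqr_ge0.
have h3 : 0 <= rj^+2 by apply: sqr_ge0.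
lra.
Qed.

Lemma dist_eq (R : rcfType) (v w : R * R) (x : R) : 0 <= x ->
  dist v w = Num.sqrt x -> dist2 v w = x.
Proof.
move=> hx; rewrite /dist => /eqP; rewrite eqr_sqrt // ?addr_ge0 ?sqr_ge0 //.
by move/eqP.
Qed.

Lemma cramer (R : fieldType) (u1 u2 w1 w2 al be : R) : u1*w2 - u2*w1 != 0 ->
  exists x1 x2, x1*u1 + x2*u2 = al /\ x1*w1 + x2*w2 = be.
Proof.
move=> hD.
exists ((al*w2 - be*u2)/(u1*w2 - u2*w1)), ((be*u1 - al*w1)/(u1*w2 - u2*w1)).
by split; field.
Qed.

Lemma delta_pos (R : rcfType) (a b c : R) : 1 < a -> 1 < b -> 1 < c -> 0 < Delta_abc a b c.
Proof.
rewrite /Delta_abc => ha hb hc.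
have a0 : 0 < a by apply: lt_trans ha.
have b0 : 0 < b by apply: lt_trans hb.
have c0 : 0 < c by apply: lt_trans hc.
have h1 : 1 < a^+2 by rewrite expr2; have := ltr_pM ler01 ler01 ha ha; rewrite mul1r.
have h2 : 0 <= b^+2 by apply: sqr_ge0.
have h3 : 0 <= c^+2 by apply: sqr_ge0.
have h4 : 0 < 2*a*b*c by rewrite !mulr_gt0.
lra.
Qed.

Theorem theorem4p1 (R : rcfType) (ri rj rk a b c : R) (vi vj vk : R * R) :
  0 < ri -> 0 < rj -> 0 < rk ->
  1 < a -> 1 < b -> 1 < c ->
  edge_length ri rj c < edge_length rj rk a + edge_length rk ri b ->
  edge_length rj rk a < edge_length rk ri b + edge_length ri rj c ->
  edge_length rk ri b < edge_length ri rj c + edge_length rj rk a ->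
  dist vi vj = edge_length ri rj c ->
  dist vj vk = edge_length rj rk a ->
  dist vk vi = edge_length rk ri b ->
  (exists (p : R * R) (rho : R), 0 < rho /\
     orthogonal_circles p rho vi ri /\ orthogonal_circles p rho vj rj /\
     orthogonal_circles p rho vk rk) /\
  (forall (p : R * R) (rho : R), 0 < rho ->
     orthogonal_circles p rho vi ri -> orthogonal_circles p rho vj rj ->
     orthogonal_circles p rho vk rk ->
     ri * rj * rk * Num.sqrt (Delta_abc a b c) = 2 * rho * triangle_area vi vj vk).
Proof.
move=> hi hj hk ha hb hc T1 T2 T3 Dij Djk Dki.
have Pc := arg_pos hi hj hc.
have Pa := arg_pos hj hk ha.
have Pb := arg_pos hk hi hb.
have Eij := dist_eq (ltW Pc) Dij.
have Ejk := dist_eq (ltW Pa) Djk.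
have Eki := dist_eq (ltW Pb) Dki.
move: Eij Ejk Eki; clear Dij Djk Dki; case: vi => i1 i2; case: vj => j1 j2; case: vk => k1 k2.
rewrite /dist2 /= => Eij Ejk Eki.
have Lu : (j1-i1)^+2 + (j2-i2)^+2 = ri^+2 + rj^+2 + 2*c*ri*rj by rewrite -Eij; ring.
have Lw : (k1-i1)^+2 + (k2-i2)^+2 = ri^+2 + rk^+2 + 2*b*ri*rk.
  have -> : ri^+2 + rk^+2 + 2*b*ri*rk = rk^+2 + ri^+2 + 2*b*rk*ri by ring.
  by rewrite -Eki; ring.
have Luw : ((j1-i1)-(k1-i1))^+2 + ((j2-i2)-(k2-i2))^+2 = rj^+2 + rk^+2 + 2*a*rj*rk.
  by rewrite -Ejk; ring.
have dpos := delta_pos ha hb hc.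
have rpos : 0 < ri * rj * rk by rewrite !mulr_gt0.
split; last first.
  case=> p1 p2 rho hr; rewrite /orthogonal_circles /dist2 /= => O1 O2 O3.
  have ea : (p1-i1)*(j1-i1) + (p2-i2)*(j2-i2) = (ri^+2 - rj^+2 + (ri^+2 + rj^+2 + 2*c*ri*rj)) / 2.
    have e : (p1-i1)*(j1-i1) + (p2-i2)*(j2-i2) = (((p1-i1)^+2 + (p2-i2)^+2) + ((j1-i1)^+2 + (j2-i2)^+2) - ((p1-j1)^+2 + (p2-j2)^+2)) / 2 by field.
    by rewrite e O1 O2 Lu; congr (_ / 2); ring.
  have eb : (p1-i1)*(k1-i1) + (p2-i2)*(k2-i2) = (ri^+2 - rk^+2 + (ri^+2 + rk^+2 + 2*b*ri*rk)) / 2.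
    have e : (p1-i1)*(k1-i1) + (p2-i2)*(k2-i2) = (((p1-i1)^+2 + (p2-i2)^+2) + ((k1-i1)^+2 + (k2-i2)^+2) - ((p1-k1)^+2 + (p2-k2)^+2)) / 2 by field.
    by rewrite e O1 O3 Lw; congr (_ / 2); ring.
  have C := core Lu Lw Luw ea eb.
  rewrite O1 (_ : rho^+2 + ri^+2 - ri^+2 = rho^+2) in C; last by ring.
  have -> : 2 * rho * triangle_area (i1, i2) (j1, j2) (k1, k2) =
     Num.sqrt (rho^+2 * ((j1 - i1) * (k2 - i2) - (j2 - i2) * (k1 - i1))^+2).
    rewrite -exprMn sqrtr_sqr normrM (gtr0_norm hr) /triangle_area /=.
    rewrite (mulrC (k1 - i1)); by field.
  by rewrite C sqrtrM ?sqr_ge0 // sqrtr_sqr (gtr0_norm rpos).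
set lc := edge_length ri rj c in T1 T2 T3.
set la := edge_length rj rk a in T1 T2 T3.
set lb := edge_length rk ri b in T1 T2 T3.
have lc2 : lc ^+ 2 = ri^+2 + rj^+2 + 2*c*ri*rj by rewrite /lc /edge_length sqr_sqrtr // ltW.
have la2 : la ^+ 2 = rj^+2 + rk^+2 + 2*a*rj*rk by rewrite /la /edge_length sqr_sqrtr // ltW.
have lb2 : lb ^+ 2 = rk^+2 + ri^+2 + 2*b*rk*ri by rewrite /lb /edge_length sqr_sqrtr // ltW.
have lcp : 0 < lc by rewrite /lc /edge_length sqrtr_gt0.
have lap : 0 < la by rewrite /la /edge_length sqrtr_gt0.
have lbp : 0 < lb by rewrite /lb /edge_length sqrtr_gt0.
set D := (j1 - i1) * (k2 - i2) - (j2 - i2) * (k1 - i1).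
have D2 : D ^+ 2 = (la+lb+lc)*(-la+lb+lc)*(la-lb+lc)*(la+lb-lc) / 4.
  have huw : (j1-i1)*(k1-i1) + (j2-i2)*(k2-i2) = (((j1-i1)^+2 + (j2-i2)^+2) + ((k1-i1)^+2 + (k2-i2)^+2) - (((j1-i1)-(k1-i1))^+2 + ((j2-i2)-(k2-i2))^+2)) / 2 by field.
  have -> : D ^+ 2 = ((j1-i1)^+2 + (j2-i2)^+2) * ((k1-i1)^+2 + (k2-i2)^+2) - ((j1-i1)*(k1-i1) + (j2-i2)*(k2-i2))^+2 by rewrite /D; ring.
  rewrite huw Lu Lw Luw -lc2 -la2.
  have -> : ri ^+ 2 + rk ^+ 2 + 2 * b * ri * rk = lb ^+ 2 by rewrite lb2; ring.
  by field.
have D2p : 0 < D ^+ 2.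
  rewrite D2 divr_gt0 // ?ltr0n // !mulr_gt0 //; lra.
have Dn0 : D != 0 by apply: contraTneq D2p => ->; rewrite expr0n ltxx.
have [x1 [x2 [ea eb]]] := cramer ((ri^+2 - rj^+2 + (ri^+2 + rj^+2 + 2*c*ri*rj)) / 2)
   ((ri^+2 - rk^+2 + (ri^+2 + rk^+2 + 2*b*ri*rk)) / 2) Dn0.
have C := core Lu Lw Luw ea eb.
set P := x1 ^+ 2 + x2 ^+ 2 - ri ^+ 2 in C.
have Pp : 0 < P.
  have : 0 < P * D ^+ 2 by rewrite /D C mulr_gt0 // exprn_gt0.
  by rewrite pmulr_lgt0.
exists (i1 + x1, i2 + x2), (Num.sqrt P).
rewrite /orthogonal_circles /dist2 /= sqr_sqrtr ?ltW // sqrtr_gt0 Pp /P.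
split=> //; split; last split.
- by ring.
- have -> : (i1 + x1 - j1) ^+ 2 + (i2 + x2 - j2) ^+ 2 = (x1^+2 + x2^+2) - 2 * (x1 * (j1 - i1) + x2 * (j2 - i2)) + ((j1-i1)^+2 + (j2-i2)^+2) by ring.
  by rewrite ea Lu; field.
- have -> : (i1 + x1 - k1) ^+ 2 + (i2 + x2 - k2) ^+ 2 = (x1^+2 + x2^+2) - 2 * (x1 * (k1 - i1) + x2 * (k2 - i2)) + ((k1-i1)^+2 + (k2-i2)^+2) by ring.
  by rewrite eb Lw; field.
Qed.
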